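(* Assume (A1) and (A2'), and let $\alpha\ge\frac12\max\{0,\max_{j\in\Gamma_h}(V(x_j)+\omega)\}+\frac12$. Let $u_h^0\in\mathcal S_{h,p+1}$. Then for every $\tau>0$ and every $n\ge0$ the fully discrete GFALM iterates satisfy $$Q_h(u_h^{n+1})-Q_h(u_h^n)\le-\frac{\tau^2\|\widetilde\mu_h^{n+1}\|_{1,h}^2+4\tau\|\widetilde\mu_h^{n+1}\|_h^2}{2\|\widetilde u_h^{n+1}\|_{h,p+1}^2}.$$
   Context: Fully discrete setting ($d=1$). $\Omega=[x_0,x_0+L]$, $M>0$ even, $h=L/M$, grid $x_j=x_0+jh$, $j\in\Gamma_h=\{0,\dots,M-1\}$, periodic boundary conditions; $X_h=\mathbb R^M$. Let $\varphi_j(x)=\frac1M\sum_{l=-M/2}^{M/2}\frac1{a_l}e^{\mathrm il\sigma(x-x_j)}$ with $a_l=1$ for $|l|<M/2$, $a_l=2$ for $|l|=M/2$, $\sigma=2\pi/L$; $(\mathbf D_{xx})_{j,l}=\varphi_l''(x_j)$ ($-\mathbf D_{xx}$ symmetric positive semidefinite). $\langle u_h,v_h\rangle_h=h\sum_j u_jv_j$, $\|u_h\|_h^2=\langle u_h,u_h\rangle_h$, $|u_h|_{1,h}^2=\langle-\mathbf D_{xx}u_h,u_h\rangle_h$, $\|u_h\|_{1,h}^2=\|u_h\|_h^2+|u_h|_{1,h}^2$, $\|u_h\|_{h,q}=(h\sum_j|u_j|^q)^{1/q}$. With $V_j=V(x_j)$: $Q_h(u_h)=\frac12|u_h|_{1,h}^2+h\sum_jV_j|u_j|^2+\omega\|u_h\|_h^2$;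 $\mathcal S_{h,p+1}=\{u_h:\|u_h\|_{h,p+1}=1\}$; $\widetilde\lambda_h(u_h)=Q_h(u_h)/\|u_h\|_{h,p+1}^{p+1}$. Assumption (A1): $1<p<\infty$, $V\ge0$ bounded. $\lambda_0':=\inf\{\frac12|u_h|_{1,h}^2+h\sum_jV_j|u_j|^2:\|u_h\|_h=1\}$; (A2'): $\omega>-\lambda_0'$. Fully discrete GFALM: for $j\in\Gamma_h$, $\frac1\tau(\widetilde u_j^{n+1}-u_j^n)=-\widetilde\mu_j^{n+1}$, $\widetilde\mu_j^{n+1}=-\frac12(\mathbf D_{xx}\widetilde u_h^{n+1})_j+(V_j+\omega-\widetilde\lambda_h(u_h^n)|u_j^n|^{p-1})u_j^n+\alpha(\widetilde u_j^{n+1}-u_j^n)$, and $u_j^{n+1}=\widetilde u_j^{n+1}/\|\widetilde u_h^{n+1}\|_{h,p+1}$. *)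

(* Defs.v *)
From HB Require Import structures.
From mathcomp Require Import all_boot all_order all_algebra.
From mathcomp Require Import all_classical all_reals all_analysis.
Set Implicit Arguments. Unset Strict Implicit. Unset Printing Implicit Defensive.
Import Order.TTheory GRing.Theory Num.Theory.
Local Open Scope ring_scope.
Local Open Scope classical_set_scope.

Section FullyDiscrete.
Variables (R : realType) (x0 L : R) (M : nat).

Definition hstep : R := L / M%:R.
Definition xgrid (j : nat) : R := x0 + j%:R * hstep.
Definition sigma : R := 2 * pi / L.

(* a_l, where the summation index l = i - M/2 runs over -M/2..M/2 (i < M+1) *)
Definition acoef (i : nat) : R := if (i == 0)%N || (i == M)%N then 2 else 1.
Definition lfreq (i : nat) : R := i%:R - (M./2)%:R.

(* phi_j(x) = 1/M sum_{l=-M/2}^{M/2} 1/a_l e^{i l sigma (x - x_j)}; since a_l = a_{-l}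
   the imaginary parts cancel and this is the real function below. *)
Definition phi (j : nat) (x : R) : R :=
  (M%:R)^-1 * \sum_(i < M.+1) (acoef i)^-1 * cos (lfreq i * sigma * (x - xgrid j)).

Definition Dxx (j l : 'I_M) : R := derive1 (derive1 (phi l)) (xgrid j).
Definition Dxx_app (u : 'I_M -> R) (j : 'I_M) : R := \sum_(l < M) Dxx j l * u l.

Definition ip_h (u v : 'I_M -> R) : R := hstep * \sum_(j < M) u j * v j.
Definition nrm2_h (u : 'I_M -> R) : R := ip_h u u.
Definition nrm_h (u : 'I_M -> R) : R := Num.sqrt (nrm2_h u).
Definition semi2_1h (u : 'I_M -> R) : R := ip_h (fun j => - Dxx_app u j) u.
Definition nrm2_1h (u : 'I_M -> R) : R := nrm2_h u + semi2_1h u.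
Definition pnorm_h (q : R) (u : 'I_M -> R) : R :=
  (hstep * \sum_(j < M) `|u j| `^ q) `^ q^-1.

Variables (V : R -> R) (omega p : R).

Definition potE (u : 'I_M -> R) : R := hstep * \sum_(j < M) V (xgrid j) * u j ^+ 2.
Definition Q_h (u : 'I_M -> R) : R := 2^-1 * semi2_1h u + potE u + omega * nrm2_h u.
Definition lam_h (u : 'I_M -> R) : R := Q_h u / (pnorm_h (p + 1) u) `^ (p + 1).

End FullyDiscrete.

Definition lambda0' (R : realType) (x0 L : R) (M : nat) (V : R -> R) : R :=
  inf [set 2^-1 * semi2_1h x0 L u + potE x0 L V u | u in [set u : 'I_M -> R | nrm_h L u = 1]].

(* Main.v *)
Require Import Defs.
From HB Require Import structures.
From mathcomp Require Import all_boot all_order all_algebra.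
From mathcomp Require Import all_classical all_reals all_analysis.
From mathcomp Require Import ring lra.
Import Order.TTheory GRing.Theory Num.Theory.
Local Open Scope ring_scope.

Section Der.
Variable R : realType.

Lemma dlin (c a x : R) : is_derive x 1 (fun y : R => c * (y - a)) c.
Proof.
have H1 : is_derive x 1 (fun y : R => y - a) 1.
  have := @is_deriveB R R R id (cst a) x 1 1 0 _ _.
  by rewrite subr0; apply.
have := @is_deriveZ R R R (fun y : R => y - a) c x 1 1 H1.
by rewrite /GRing.scale /= mulr1.
Qed.

Lemma dcos (c a x : R) :
  is_derive x 1 (fun y : R => cos (c * (y - a))) (- sin (c * (x - a)) * c).
Proof.
exact: (@is_derive1_comp R cos (fun y : R => c * (y - a)) x _ c (is_derive_cos _) (dlin c a x)).
Qed.

Lemma dsin (c a x : R) :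
  is_derive x 1 (fun y : R => sin (c * (y - a))) (cos (c * (x - a)) * c).
Proof.
exact: (@is_derive1_comp R sin (fun y : R => c * (y - a)) x _ c (is_derive_sin _) (dlin c a x)).
Qed.

Lemma dsumk n (k : R) (F : 'I_n -> R -> R) (dF : 'I_n -> R -> R) (x : R) :
  (forall i, is_derive x 1 (F i) (dF i x)) ->
  is_derive x 1 (fun y => k * \sum_(i < n) F i y) (k * \sum_(i < n) dF i x).
Proof.
move=> H.
have H2 : is_derive x 1 (fun y => \sum_(i < n) F i y) (\sum_(i < n) dF i x).
  have E : (fun y => \sum_(i < n) F i y) = \sum_(i < n) F i.
    by apply/funext => y; rewrite fct_sumE.
  rewrite E; exact: is_derive_sum.
exact: (@is_deriveZ R R R _ k x 1 _ H2).
Qed.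

Lemma derive1_of (f df : R -> R) : (forall x : R, is_derive x 1 f (df x)) -> derive1 f = df.
Proof. by move=> H; apply/funext => x; rewrite derive1E derive_val. Qed.

End Der.

Section Sym.
Variables (R : realType) (x0 L : R) (M : nat).

Lemma dscal (k : R) (f : R -> R) (df x : R) : is_derive x 1 f df ->
  is_derive x 1 (fun y => k * f y) (k * df).
Proof. move=> H; exact: (@is_deriveZ R R R _ k x 1 _ H). Qed.

Lemma Dxx_formula (j l : 'I_M) : Dxx x0 L j l =
  (M%:R)^-1 * \sum_(i < M.+1) (acoef R M i)^-1 *
     (- (cos (lfreq R M i * sigma L * (xgrid x0 L M j - xgrid x0 L M l)) * (lfreq R M i * sigma L)) * (lfreq R M i * sigma L)).
Proof.
rewrite /Dxx.
have E1 : derive1 (phi x0 L M l) = fun x => (M%:R)^-1 * \sum_(i < M.+1) (acoef R M i)^-1 *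
     (- sin (lfreq R M i * sigma L * (x - xgrid x0 L M l)) * (lfreq R M i * sigma L)).
  apply: derive1_of => x; rewrite /phi.
  refine (@dsumk R M.+1 (M%:R)^-1 (fun i y => (acoef R M i)^-1 * cos (lfreq R M i * sigma L * (y - xgrid x0 L M l)))
     (fun i y => (acoef R M i)^-1 * (- sin (lfreq R M i * sigma L * (y - xgrid x0 L M l)) * (lfreq R M i * sigma L))) x _).
  move=> i; apply: dscal; exact: dcos.
rewrite E1.
have E2 : derive1 (fun x => (M%:R)^-1 * \sum_(i < M.+1) (acoef R M i)^-1 *
     (- sin (lfreq R M i * sigma L * (x - xgrid x0 L M l)) * (lfreq R M i * sigma L))) =
  fun x => (M%:R)^-1 * \sum_(i < M.+1) (acoef R M i)^-1 *
     (- (cos (lfreq R M i * sigma L * (x - xgrid x0 L M l)) * (lfreq R M i * sigma L)) * (lfreq R M i * sigma L)).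
  apply: derive1_of => x.
  refine (@dsumk R M.+1 (M%:R)^-1 (fun i y => (acoef R M i)^-1 * (- sin (lfreq R M i * sigma L * (y - xgrid x0 L M l)) * (lfreq R M i * sigma L)))
     (fun i y => (acoef R M i)^-1 * (- (cos (lfreq R M i * sigma L * (y - xgrid x0 L M l)) * (lfreq R M i * sigma L)) * (lfreq R M i * sigma L))) x _).
  move=> i; apply: dscal.
  have H := dsin R (lfreq R M i * sigma L) (xgrid x0 L M l) x.
  have H2 := @is_deriveN R R R _ x 1 _ H.
  have H3 := @dscal (lfreq R M i * sigma L) _ _ _ H2.
  set c := lfreq R M i * sigma L in H H2 H3 *.
  set g := (fun y : R => sin (c * (y - xgrid x0 L M l))) in H H2 H3 *.
  have E : (fun y => c * (- g) y) = (fun y => - sin (c * (y - xgrid x0 L M l)) * c).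
    by apply/funext => y; rewrite /g /= mulrC.
  rewrite E in H3; rewrite [X in is_derive _ _ _ X]mulrC; exact: H3.
by rewrite E2.
Qed.

Lemma Dxx_sym (j l : 'I_M) : Dxx x0 L j l = Dxx x0 L l j.
Proof.
rewrite !Dxx_formula; congr (_ * _); apply: eq_bigr => i _.
by rewrite -(opprB (xgrid x0 L M j)) mulrN cosN.
Qed.

End Sym.

Lemma ptwise (R : realType) (a b u m W g l t al : R) :
  m = -2^-1*(a - t* b) + (W - l*g)*u + al*((u - t* m) - u) ->
  (- 2^-1 * (a - t* b) * (u - t* m) + W * (u - t* m)^+2 - (- 2^-1 * a * u + W * u^+2))
  + 2 * l * t * g * u * m
  - (- 2^-1 * t^+2 * m * m + 2^-1 * t^+2 * b * m - 2 * t * m * m)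
  - t^+2 * m^+2 * (W - 2 * al + 2^-1) - 2^-1 * t * (b * u - a * m) = 0.
Proof.
move=> H.
have Ha : a = t* b + 2*((W-l*g)*u + al*(-t* m) - m).
  have H' : 2 * m = -(a - t * b) + 2*((W-l*g)*u) + 2*(al*((u - t * m) - u)).
    by rewrite {1}H; field.
  lra.
by rewrite Ha; field.
Qed.

Section Core.
Variables (R : realType) (x0 L : R) (M : nat) (V : R -> R) (omega p : R).

Lemma bsplitR (F G : 'I_M -> R) : \sum_j F j + \sum_j G j = \sum_j (F j + G j).
Proof. by rewrite big_split. Qed.
Lemma bnegR (F : 'I_M -> R) : - \sum_j F j = \sum_j - F j.
Proof. by rewrite sumrN. Qed.

Lemma Dxx_app_lin (f g : 'I_M -> R) (c : R) (j : 'I_M) :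
  Dxx_app x0 L (fun l => f l - c * g l) j = Dxx_app x0 L f j - c * Dxx_app x0 L g j.
Proof.
rewrite /Dxx_app mulr_sumr -sumrB; apply: eq_bigr => l _; ring.
Qed.

Lemma Dsym (f g : 'I_M -> R) :
  \sum_j Dxx_app x0 L f j * g j = \sum_j Dxx_app x0 L g j * f j.
Proof.
rewrite /Dxx_app.
under eq_bigr do rewrite mulr_suml.
under [RHS]eq_bigr do rewrite mulr_suml.
rewrite exchange_big /=; apply: eq_bigr => l _; apply: eq_bigr => j _.
rewrite Dxx_sym; ring.
Qed.

Definition Wf (j : 'I_M) : R := V (xgrid x0 L M j) + omega.

Lemma core (u ut mu : 'I_M -> R) (lam tau alpha : R) :
  (forall j, ut j = u j - tau * mu j) ->
  (forall j, mu j = - 2^-1 * Dxx_app x0 L ut j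
      + (Wf j - lam * `|u j| `^ (p - 1)) * u j + alpha * (ut j - u j)) ->
  Q_h x0 L V omega ut - Q_h x0 L V omega u
   + 2 * lam * tau * (hstep L M * \sum_j `|u j| `^ (p - 1) * u j * mu j)
   + (tau ^+ 2 * nrm2_1h x0 L mu + 4 * tau * nrm2_h L mu) / 2
  = hstep L M * \sum_j tau ^+ 2 * mu j ^+ 2 * (Wf j - 2 * alpha + 2^-1).
Proof.
move=> Hu Hmu.
have Hut : ut = (fun l => u l - tau * mu l) by apply/funext => l; exact: Hu.
have S0 : \sum_j ((- 2^-1 * (Dxx_app x0 L u j - tau * Dxx_app x0 L mu j) * (u j - tau * mu j)
     + Wf j * (u j - tau * mu j)^+2 - (- 2^-1 * Dxx_app x0 L u j * u j + Wf j * u j^+2))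
   + 2 * lam * tau * `|u j| `^ (p - 1) * u j * mu j
   - (- 2^-1 * tau^+2 * mu j * mu j + 2^-1 * tau^+2 * Dxx_app x0 L mu j * mu j - 2 * tau * mu j * mu j)
   - tau^+2 * mu j^+2 * (Wf j - 2 * alpha + 2^-1)) = 0.
  transitivity (\sum_j 2^-1 * tau * (Dxx_app x0 L mu j * u j - Dxx_app x0 L u j * mu j)).
    apply: eq_bigr => j _.
    have := @ptwise R (Dxx_app x0 L u j) (Dxx_app x0 L mu j) (u j) (mu j) (Wf j) (`|u j| `^ (p - 1)) lam tau alpha.
    move=> P; apply/eqP; rewrite -subr_eq0; apply/eqP; rewrite -[RHS]P.
      by ring.
    by rewrite {1}Hmu Hut Dxx_app_lin /=.
  by rewrite -mulr_sumr sumrB Dsym subrr mulr0.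
apply/eqP; rewrite -subr_eq0; apply/eqP.
rewrite Hut /Q_h /nrm2_1h /semi2_1h /potE /nrm2_h /ip_h /=.
rewrite !(mulr_sumr, mulr_suml, bsplitR, bnegR).
rewrite -[RHS](mulr0 (hstep L M)) -[X in _ = _ * X]S0 mulr_sumr.
apply: eq_bigr => j _; by rewrite Dxx_app_lin /Wf; field.
Qed.

End Core.

Section Homog.
Variables (R : realType) (x0 L : R) (M : nat) (V : R -> R) (omega p : R).

Lemma nrm2_hom (c : R) (f : 'I_M -> R) : nrm2_h L (fun j => c * f j) = c ^+ 2 * nrm2_h L f.
Proof. rewrite /nrm2_h /ip_h [RHS]mulrCA [X in _ = _ * X]mulr_sumr; congr (_ * _); apply: eq_bigr => j _; ring. Qed.

Lemma semi2_hom (c : R) (f : 'I_M -> R) : semi2_1h x0 L (fun j => c * f j) = c ^+ 2 * semi2_1h x0 L f.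
Proof.
rewrite /semi2_1h /ip_h [RHS]mulrCA [X in _ = _ * X]mulr_sumr; congr (_ * _); apply: eq_bigr => j _.
have -> : Dxx_app x0 L (fun j => c * f j) j = c * Dxx_app x0 L f j.
  by rewrite /Dxx_app mulr_sumr; apply: eq_bigr => l _; ring.
ring.
Qed.

Lemma pot_hom (c : R) (f : 'I_M -> R) : potE x0 L V (fun j => c * f j) = c ^+ 2 * potE x0 L V f.
Proof. rewrite /potE [RHS]mulrCA [X in _ = _ * X]mulr_sumr; congr (_ * _); apply: eq_bigr => j _; ring. Qed.

Lemma Q_hom (c : R) (f : 'I_M -> R) :
  Q_h x0 L V omega (fun j => c * f j) = c ^+ 2 * Q_h x0 L V omega f.
Proof. rewrite /Q_h semi2_hom pot_hom nrm2_hom; ring. Qed.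

Lemma Q_zero (f : 'I_M -> R) : (forall j, f j = 0) -> Q_h x0 L V omega f = 0.
Proof.
move=> H; have -> : f = (fun j => 0 * f j) by apply/funext => j; rewrite H mul0r.
by rewrite Q_hom expr0n mul0r.
Qed.

Lemma hstep_gt0 : 0 < L -> (0 < M)%N -> 0 < hstep L M.
Proof. by move=> L0 M0; rewrite /hstep divr_gt0 // ltr0n. Qed.

Lemma E_lb : 0 < L -> (0 < M)%N -> (forall x, 0 <= V x) ->
  has_lbound [set 2^-1 * semi2_1h x0 L u + potE x0 L V u | u in [set u : 'I_M -> R | nrm_h L u = 1]].
Proof.
move=> L0 M0 V0.
have h0 := hstep_gt0 L0 M0.
exists (- (2^-1 * \sum_(j < M) \sum_(l < M) `|Dxx x0 L j l|)) => y [v /= Hv <-].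
have Hs : hstep L M * \sum_j v j * v j = 1.
  move: Hv; rewrite /nrm_h /nrm2_h /ip_h => Hv.
  have X0 : 0 <= hstep L M * \sum_j v j * v j.
    by apply: mulr_ge0; [exact: ltW | apply: sumr_ge0 => j _; rewrite -expr2 sqr_ge0].
  by rewrite -(sqr_sqrtr X0) Hv expr1n.
have Hi : forall i, hstep L M * (v i ^+ 2) <= 1.
  move=> i; rewrite -Hs ler_pM2l // (bigD1 i) //= -expr2 lerDl sumr_ge0 // => j _.
  by rewrite -expr2 sqr_ge0.
have Hpot : 0 <= potE x0 L V v.
  by apply: mulr_ge0; [exact: ltW | apply: sumr_ge0 => j _; rewrite mulr_ge0 // sqr_ge0].
have Hsem : - \sum_(j < M) \sum_(l < M) `|Dxx x0 L j l| <= semi2_1h x0 L v.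
  rewrite /semi2_1h /ip_h big_distrr /= -sumrN; apply: ler_sum => j _.
  have -> : hstep L M * (- Dxx_app x0 L v j * v j) =
     \sum_(l < M) (- (hstep L M * (Dxx x0 L j l * (v l * v j)))).
    rewrite /Dxx_app -sumrN big_distrl big_distrr /=; apply: eq_bigr => l _; ring.
  rewrite -sumrN; apply: ler_sum => l _; rewrite lerN2.
  have Hl : hstep L M * `|v l * v j| <= 1.
    have : 2 * `|v l * v j| <= v l ^+ 2 + v j ^+ 2.
      rewrite normrM -(real_normK (num_real (v l))) -(real_normK (num_real (v j))).
      have := sqr_ge0 (`|v l| - `|v j|); lra.
    have := Hi l; have := Hi j. nra.
  have Hn : Dxx x0 L j l * (v l * v j) <= `|Dxx x0 L j l| * `|v l * v j|.
    by rewrite -normrM ler_norm.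
  have := normr_ge0 (Dxx x0 L j l); have := normr_ge0 (v l * v j). nra.
have := Hsem; lra.
Qed.


Lemma Q_ge0 : 0 < L -> (0 < M)%N -> (forall x, 0 <= V x) ->
  omega > - lambda0' x0 L M V -> forall f : 'I_M -> R, 0 <= Q_h x0 L V omega f.
Proof.
move=> L0 M0 V0 Hom f.
have h0 := hstep_gt0 L0 M0.
have n0 : 0 <= nrm2_h L f.
  by apply: mulr_ge0; [exact: ltW | apply: sumr_ge0 => j _; rewrite -expr2 sqr_ge0].
have [Hz|Hnz] := eqVneq (nrm2_h L f) 0.
  rewrite Q_zero // => j.
  have Hs : \sum_(i < M) f i * f i = 0.
    move: Hz; rewrite /nrm2_h /ip_h; move/eqP; rewrite mulf_eq0 gt_eqF //=; exact: eqP.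
  have := @psumr_eq0P R _ xpredT (fun i => f i * f i) _ Hs j isT.
  move=> H; have /eqP : f j * f j = 0 by apply: H => i _; rewrite -expr2 sqr_ge0.
  by rewrite mulf_eq0 orbb => /eqP.
have s2p : 0 < nrm2_h L f by rewrite lt_def Hnz n0.
set s := Num.sqrt (nrm2_h L f).
have sp : 0 < s by rewrite sqrtr_gt0.
have ss : s ^+ 2 = nrm2_h L f by rewrite sqr_sqrtr.
set v := fun j => s^-1 * f j.
have Hv : nrm_h L v = 1.
  rewrite /nrm_h /v nrm2_hom -ss exprVn mulVf ?sqrtr1 //.
  by rewrite expf_neq0 // gt_eqF.
have Hin := ge_inf (E_lb L0 M0 V0).
have Hle : lambda0' x0 L M V <= 2^-1 * semi2_1h x0 L v + potE x0 L V v.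
  by apply: Hin; exists v.
have HE : 2^-1 * semi2_1h x0 L v + potE x0 L V v =
   (s ^+ 2)^-1 * (2^-1 * semi2_1h x0 L f + potE x0 L V f).
  by rewrite /v semi2_hom pot_hom exprVn; ring.
rewrite HE in Hle.
have Ef : 2^-1 * semi2_1h x0 L f + potE x0 L V f >= s ^+ 2 * lambda0' x0 L M V.
  have s2p' : 0 < s ^+ 2 by rewrite ss.
  have i0 : 0 < (s ^+ 2)^-1 by rewrite invr_gt0.
  rewrite -(ler_pM2l i0) mulrA mulVf ?mul1r //.
  by rewrite gt_eqF.
rewrite /Q_h -ss in Ef *.
have s2p' : 0 < s ^+ 2 by rewrite ss.
nra.
Qed.

End Homog.

Section Holder.
Variables (R : realType) (L : R) (M : nat) (p : R).
Hypothesis h0 : 0 < hstep L M.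
Hypothesis p0 : 0 < p.

Lemma P0 : 0 < p + 1. Proof. by apply: addr_gt0. Qed.

Lemma Spos (f : 'I_M -> R) : 0 <= hstep L M * \sum_j `|f j| `^ (p + 1).
Proof. by apply: mulr_ge0; [exact: ltW | apply: sumr_ge0 => j _; exact: powR_ge0]. Qed.

Lemma pnormP (f : 'I_M -> R) : pnorm_h L (p + 1) f `^ (p + 1) = hstep L M * \sum_j `|f j| `^ (p + 1).
Proof.
rewrite /pnorm_h -powRrM mulVf ?powRr1 //; first exact: Spos.
by rewrite gt_eqF // P0.
Qed.

Lemma pnorm1 (f : 'I_M -> R) : pnorm_h L (p + 1) f = 1 -> hstep L M * \sum_j `|f j| `^ (p + 1) = 1.
Proof. by move=> H; rewrite -pnormP H powR1. Qed.

Lemma pnorm_ge0 (f : 'I_M -> R) : 0 <= pnorm_h L (p + 1) f.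
Proof. exact: powR_ge0. Qed.

Lemma gu_u (u : 'I_M -> R) (j : 'I_M) : `|u j| `^ (p - 1) * u j * u j = `|u j| `^ (p + 1).
Proof.
rewrite -mulrA.
have -> : u j * u j = `|u j| * `|u j|.
  by rewrite -!expr2 real_normK // num_real.
transitivity (`|u j| * (`|u j| * `|u j| `^ (p - 1))); first by ring.
rewrite mulr_powRB1 //.
have e2 := mulr_powRB1 (normr_ge0 (u j)) P0.
by rewrite addrK in e2.
Qed.

Lemma normalize (f : 'I_M -> R) : 0 < pnorm_h L (p + 1) f ->
  pnorm_h L (p + 1) (fun j => (pnorm_h L (p + 1) f)^-1 * f j) = 1.
Proof.
move=> N0; set N := pnorm_h L (p + 1) f.
have k0 : 0 <= N^-1 by rewrite invr_ge0 ltW.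
rewrite {1}/pnorm_h.
have -> : hstep L M * \sum_j `|N^-1 * f j| `^ (p + 1) = N^-1 `^ (p + 1) * (N `^ (p + 1)).
  rewrite pnormP [RHS]mulrCA [X in _ = _ * X]mulr_sumr; congr (_ * _); apply: eq_bigr => j _.
  by rewrite normrM (ger0_norm k0) powRM.
rewrite -powRM ?ltW //. have -> : N^-1 * N = 1 by rewrite mulVf // gt_eqF. by rewrite !powR1. by rewrite invr_gt0.
Qed.

Lemma holder (u ut : 'I_M -> R) :
  hstep L M * \sum_j `|u j| `^ (p + 1) = 1 -> 0 < pnorm_h L (p + 1) ut ->
  hstep L M * \sum_j `|u j| `^ (p - 1) * u j * ut j <= pnorm_h L (p + 1) ut.
Proof.
move=> Hu N0; set N := pnorm_h L (p + 1) ut.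
set k := N^-1.
have k0 : 0 < k by rewrite invr_gt0.
set Q := (p + 1) / p.
have Q0 : 0 < Q by rewrite divr_gt0 // P0.
have PQ : (p + 1)^-1 + Q^-1 = 1.
  by rewrite /Q invf_div -[X in X + _]mul1r -mulrDl addrC divff // gt_eqF // P0.
have Hpt : forall j, `|u j| `^ (p - 1) * u j * ut j * k <=
    (`|ut j| `^ (p + 1) * k `^ (p + 1)) / (p + 1) + `|u j| `^ (p + 1) / Q.
  move=> j.
  have e1 : `|u j| `^ (p - 1) * u j * ut j <= `|u j| `^ p * `|ut j|.
    have E : `|u j| `^ p = `|u j| `^ (p - 1) * `|u j| by rewrite mulrC mulr_powRB1.
    rewrite E -!mulrA -normrM.
    apply: ler_wpM2l; first exact: powR_ge0.
    exact: ler_norm.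
  have a0 : 0 <= `|ut j| * k by rewrite mulr_ge0 // ltW.
  have y := conjugate_powR a0 (powR_ge0 `|u j| p) P0 Q0 PQ.
  rewrite (powRM _ (normr_ge0 _) (ltW k0)) -powRrM in y.
  have pQ : p * Q = p + 1 by rewrite /Q mulrCA divff ?mulr1 // gt_eqF.
  rewrite pQ in y.
  apply: le_trans y.
  have := ler_wpM2r (ltW k0) e1.
  move=> H; apply: (le_trans H); lra.
have S : \sum_j (`|u j| `^ (p - 1) * u j * ut j * k) <= \sum_j ((`|ut j| `^ (p + 1) * k `^ (p + 1)) / (p + 1) + `|u j| `^ (p + 1) / Q).
  by apply: ler_sum => j _; exact: Hpt.
rewrite -mulr_suml big_split /= -!mulr_suml in S.
set G := \sum_j `|u j| `^ (p - 1) * u j * ut j in S *.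
set A := \sum_j `|ut j| `^ (p + 1) in S.
set B := \sum_j `|u j| `^ (p + 1) in S Hu.
have HA : hstep L M * A = N `^ (p + 1) by rewrite pnormP.
have HkN : k `^ (p + 1) * N `^ (p + 1) = 1.
  by rewrite -powRM ?ltW // /k mulVf ?gt_eqF // powR1.
have S2 : hstep L M * G * k <= 1.
  rewrite -mulrA.
  have := ler_wpM2l (ltW h0) S.
  move=> T; apply: (le_trans T).
  have -> : hstep L M * (A * k `^ (p + 1) / (p + 1) + B / Q) =
     (k `^ (p + 1) * (hstep L M * A)) * (p + 1)^-1 + (hstep L M * B) * Q^-1 by ring.
  by rewrite HA HkN Hu !mul1r PQ.
have kN : k * N = 1 by rewrite /k mulVf // gt_eqF.
have T := ler_wpM2r (ltW N0) S2.
rewrite mul1r in T.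
have E : hstep L M * G = hstep L M * G * k * N by rewrite -mulrA kN mulr1.
by rewrite E.
Qed.

End Holder.

Lemma arA (R : realType) (a b m t : R) : 0 < t -> (a - b) / t = - m -> a = b - t * m.
Proof.
move=> t0 H; have : a - b = - m * t by rewrite -H mulfVK // gt_eqF.
lra.
Qed.
Lemma arB (R : realType) (W mx al : R) : W <= mx -> 2^-1 * mx + 2^-1 <= al -> W - 2 * al + 2^-1 <= 0.
Proof. lra. Qed.
Lemma arC (R : realType) (N x : R) : 1 < x -> 1 - 2 * x <= N ^+ 2.
Proof. move=> x1; have := sqr_ge0 N; lra. Qed.
Lemma arD (R : realType) (Q y N2 : R) : 0 <= Q -> 1 - 2 * y <= N2 -> Q - 2 * Q * y <= Q * N2.
Proof. move=> Q0 H; have := ler_wpM2l Q0 H; lra. Qed.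
Lemma arF (R : realType) (A B lam t hG X S N2 : R) :
  A - B + 2 * lam * t * hG + X / 2 = S -> S <= 0 -> B - 2 * lam * t * hG <= B * N2 ->
  A - B * N2 <= - X / 2.
Proof. lra. Qed.

Theorem mainTheorem15 (R : realType) (x0 L : R) (M : nat)
    (V : R -> R) (omega p alpha tau : R)
    (u ut mu : nat -> 'I_M -> R) :
  0 < L -> (0 < M)%N -> ~~ odd M ->
  (* (A1) *)
  1 < p -> (forall x, 0 <= V x) -> (exists C : R, forall x, V x <= C) ->
  (* (A2') *)
  omega > - lambda0' x0 L M V ->
  alpha >= 2^-1 * (\big[Num.max/0]_(j < M) (V (xgrid x0 L M j) + omega)) + 2^-1 ->
  0 < tau ->
  (* u_h^0 in S_{h,p+1} *)
  pnorm_h L (p + 1) (u 0%N) = 1 ->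
  (* fully discrete GFALM iterates *)
  (forall n j, (ut n.+1 j - u n j) / tau = - mu n.+1 j) ->
  (forall n j, mu n.+1 j =
     - 2^-1 * Dxx_app x0 L (ut n.+1) j
     + (V (xgrid x0 L M j) + omega
        - lam_h x0 L V omega p (u n) * `|u n j| `^ (p - 1)) * u n j
     + alpha * (ut n.+1 j - u n j)) ->
  (forall n j, u n.+1 j = ut n.+1 j / pnorm_h L (p + 1) (ut n.+1)) ->
  forall n : nat,
    Q_h x0 L V omega (u n.+1) - Q_h x0 L V omega (u n) <=
    - (tau ^+ 2 * nrm2_1h x0 L (mu n.+1) + 4 * tau * nrm2_h L (mu n.+1))
      / (2 * pnorm_h L (p + 1) (ut n.+1) ^+ 2).
Proof.
move=> L0 M0 _ p1 V0 _ Hom Hal tau0 Hu0 Hdiff Hmu Hnext.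
have h0 := @hstep_gt0 R L M L0 M0.
have p0 : 0 < p by lra.
have Qge0 := @Q_ge0 R x0 L M V omega L0 M0 V0 Hom.
have Inv : forall n, (forall j, u n j = 0) \/ pnorm_h L (p + 1) (u n) = 1.
  elim => [|n IH]; first by right.
  have := @pnorm_ge0 R L M p (ut n.+1); rewrite le_eqVlt => /orP [/eqP N0|N0].
    by left => j; rewrite Hnext -N0 invr0 mulr0.
  right.
  have -> : u n.+1 = fun j => (pnorm_h L (p + 1) (ut n.+1))^-1 * ut n.+1 j.
    by apply/funext => j; rewrite Hnext mulrC.
  exact: (@normalize R L M p h0 p0).
move=> n.
set N := pnorm_h L (p + 1) (ut n.+1).
set X := tau ^+ 2 * nrm2_1h x0 L (mu n.+1) + 4 * tau * nrm2_h L (mu n.+1).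
have Hu : forall j, ut n.+1 j = u n j - tau * mu n.+1 j.
  by move=> j; apply: (@arA R _ _ _ _ tau0 (Hdiff n j)).
set lam := lam_h x0 L V omega p (u n).
have C := @core R x0 L M V omega p (u n) (ut n.+1) (mu n.+1) lam tau alpha Hu (Hmu n).
set G := \sum_j `|u n j| `^ (p - 1) * u n j * mu n.+1 j in C.
have HW : hstep L M * \sum_j tau ^+ 2 * mu n.+1 j ^+ 2 * (Wf R x0 L M V omega j - 2 * alpha + 2^-1) <= 0.
  rewrite pmulr_rle0 //; apply: sumr_le0 => j _.
  apply: mulr_ge0_le0; first by rewrite mulr_ge0 // sqr_ge0.
  have := le_bigmax (0 : R) (fun j : 'I_M => V (xgrid x0 L M j) + omega) j.
  move=> Hj; exact: (@arB R _ _ _ Hj Hal).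
have Q0 := Qge0 (u n).
have := @pnorm_ge0 R L M p (ut n.+1); rewrite le_eqVlt => /orP [/eqP N0|N0].
  have Z : forall j, u n.+1 j = 0 by move=> j; rewrite Hnext -N0 invr0 mulr0.
  rewrite (@Q_zero R x0 L M V omega _ Z) /N -N0 expr0n mulr0 invr0 mulr0 sub0r oppr_le0 //.
have Hn : u n.+1 = fun j => N^-1 * ut n.+1 j.
  by apply/funext => j; rewrite Hnext mulrC.
rewrite Hn (@Q_hom R x0 L M V omega).
have Key : Q_h x0 L V omega (u n) * N ^+ 2 >=
    Q_h x0 L V omega (u n) - 2 * lam * tau * (hstep L M * G).
  case: (Inv n) => [Hz|Hp].
    rewrite (@Q_zero R x0 L M V omega _ Hz).
    have -> : G = 0 by rewrite /G big1 // => j _; rewrite Hz mulr0 mul0r.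
    by rewrite !mulr0 mul0r subr0.
  have Hl : lam = Q_h x0 L V omega (u n) by rewrite /lam /lam_h Hp powR1 divr1.
  have H1 := @pnorm1 R L M p h0 p0 _ Hp.
  have Hgu : hstep L M * \sum_j `|u n j| `^ (p - 1) * u n j * u n j = 1.
    by rewrite -[RHS]H1; congr (_ * _); apply: eq_bigr => j _; exact: (@gu_u R M p p0).
  have Hh := @holder R L M p h0 p0 (u n) (ut n.+1) H1 N0.
  have E : hstep L M * \sum_j `|u n j| `^ (p - 1) * u n j * ut n.+1 j =
     1 - tau * (hstep L M * G).
    transitivity (hstep L M * \sum_j `|u n j| `^ (p - 1) * u n j * u n j - tau * (hstep L M * G)); last by rewrite Hgu.
    rewrite /G [tau * _]mulrCA -mulrBr.
    have -> : tau * \sum_j `|u n j| `^ (p - 1) * u n j * mu n.+1 j =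
      \sum_j tau * (`|u n j| `^ (p - 1) * u n j * mu n.+1 j) by rewrite mulr_sumr.
    rewrite -sumrB; congr (_ * _).
    by apply: eq_bigr => j _; rewrite Hu; ring.
  rewrite E -/N in Hh.
  rewrite Hl.
  have N2 : 1 - 2 * (tau * (hstep L M * G)) <= N ^+ 2.
    set x := tau * (hstep L M * G) in Hh *.
    have [x1|x1] := leP x 1.
      have a1 : 0 <= N - (1 - x) by rewrite subr_ge0.
      have a2 : 0 <= N + (1 - x) by apply: addr_ge0; [exact: ltW | rewrite subr_ge0].
      have e : N ^+ 2 - (1 - 2 * x) = (N - (1 - x)) * (N + (1 - x)) + x ^+ 2 by ring.
      by rewrite -subr_ge0 e; apply: addr_ge0; [exact: mulr_ge0 | exact: sqr_ge0].
    exact: (@arC R N x x1).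
  have := @arD R _ _ _ Q0 N2; by rewrite !mulrA.
have F : Q_h x0 L V omega (ut n.+1) - Q_h x0 L V omega (u n) * N ^+ 2 <= - X / 2.
  exact: (@arF R _ _ _ _ _ _ _ _ C HW Key).
have N2p : 0 < N ^+ 2 by rewrite exprn_gt0.
have -> : N ^-1 ^+ 2 * Q_h x0 L V omega (ut n.+1) - Q_h x0 L V omega (u n) =
   (Q_h x0 L V omega (ut n.+1) - Q_h x0 L V omega (u n) * N ^+ 2) * (N ^+ 2)^-1.
  by rewrite exprVn mulrBl mulrC -mulrA mulfV ?mulr1 // gt_eqF.
have -> : - X / (2 * N ^+ 2) = (- X / 2) * (N ^+ 2)^-1.
  by rewrite invfM mulrA.
by apply: ler_wpM2r => //; rewrite invr_ge0 ltW.
Qed.
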